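(* Let $A\subseteq\mathbb{R}^m$ and $B\subseteq\mathbb{R}^n$ be set-germs at $0$ with $0\in\overline{A}$ and $0\in\overline{B}$. Then $$D(A\times B)\subseteq\{(ta,\sqrt{1-t^2}\,b):\ a\in D(A),\ b\in D(B),\ t\in[0,1]\}.$$ Moreover, if both $A$ and $B$ satisfy condition (SSP), then equality holds.
   Context: For a set-germ $A\subset\mathbb{R}^k$ at $0$ with $0\in\overline A$, $D(A)=\{a\in S^{k-1}:\exists\, x_i\in A\setminus\{0\},\ x_i\to0,\ x_i/\|x_i\|\to a\}$ (for $A\times B$ this is computed in $\mathbb{R}^{m+n}$ at $(0,0)$). For sequences, $\|u_m\|\ll\|v_m\|,\|w_m\|$ means $\|u_m\|/\|v_m\|\to0$ and $\|u_m\|/\|w_m\|\to0$. $A$ satisfies condition (SSP) if for every sequence $a_m\in\mathbb{R}^k$ tending to $0$ with $\lim a_m/\|a_m\|\in D(A)$ there is a sequence $b_m\in A$ with $\|a_m-b_m\|\ll\|a_m\|,\|b_m\|$. *)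

(* Defs.v *)
From HB Require Import structures.
From mathcomp Require Import all_boot all_order all_algebra.
From mathcomp Require Import all_classical all_reals all_analysis.
Set Implicit Arguments. Unset Strict Implicit. Unset Printing Implicit Defensive.
Import Order.TTheory GRing.Theory Num.Theory.
Local Open Scope ring_scope.
Local Open Scope classical_set_scope.

Section Defs.
Variable R : realType.

Definition enorm (k : nat) (x : 'rV[R]_k) : R :=
  Num.sqrt (\sum_(i < k) x ord0 i ^+ 2).

Definition cvg0 (u : nat -> R) : Prop := u @ \oo --> (0 : R^o).

Definition vcvg (k : nat) (x : nat -> 'rV[R]_k) (a : 'rV[R]_k) : Prop :=
  cvg0 (fun n => enorm (x n - a)).

Definition acc0 (k : nat) (A : set 'rV[R]_k) : Prop :=
  forall e : R, 0 < e -> exists x, A x /\ x != 0 /\ enorm x < e.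

Definition Dir (k : nat) (A : set 'rV[R]_k) : set 'rV[R]_k :=
  [set a | enorm a = 1 /\
     exists x : nat -> 'rV[R]_k,
       (forall i, A (x i) /\ x i != 0) /\ vcvg x 0 /\
       vcvg (fun i => (enorm (x i))^-1 *: x i) a].

Definition SSP (k : nat) (A : set 'rV[R]_k) : Prop :=
  forall (a : nat -> 'rV[R]_k) (d : 'rV[R]_k),
    (forall i, a i != 0) -> vcvg a 0 ->
    vcvg (fun i => (enorm (a i))^-1 *: a i) d -> Dir A d ->
    exists b : nat -> 'rV[R]_k,
      (forall i, A (b i)) /\
      cvg0 (fun i => enorm (a i - b i) / enorm (a i)) /\
      cvg0 (fun i => enorm (a i - b i) / enorm (b i)).

Definition setprod (m n : nat) (A : set 'rV[R]_m) (B : set 'rV[R]_n)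
  : set 'rV[R]_(m + n) :=
  [set z | exists x y, A x /\ B y /\ z = row_mx x y].

Definition joinDir (m n : nat) (A : set 'rV[R]_m) (B : set 'rV[R]_n)
  : set 'rV[R]_(m + n) :=
  [set z | exists a b (t : R), Dir A a /\ Dir B b /\ 0 <= t /\ t <= 1 /\
     z = row_mx (t *: a) (Num.sqrt (1 - t ^+ 2) *: b)].

End Defs.

(* Main.v *)
Require Import Defs.
From mathcomp Require Import all_boot all_order all_algebra.
From mathcomp Require Import all_classical all_reals all_analysis.
Import Order.TTheory GRing.Theory Num.Theory.
Local Open Scope ring_scope.
Local Open Scope classical_set_scope.
From mathcomp Require Import ring.
Import numFieldTopology.Exports numFieldNormedType.Exports.

Set Implicit Arguments. Unset Strict Implicit.
Section Helpers.
Variable R : realType.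

Lemma sumsq_ge0 k (x : 'rV[R]_k) : 0 <= \sum_(i < k) x ord0 i ^+ 2.
Proof. by apply: sumr_ge0 => i _; exact: sqr_ge0. Qed.

Lemma enorm_ge0 k (x : 'rV[R]_k) : 0 <= enorm x.
Proof. exact: sqrtr_ge0. Qed.

Lemma enorm_sqr k (x : 'rV[R]_k) : enorm x ^+ 2 = \sum_(i < k) x ord0 i ^+ 2.
Proof. by rewrite /enorm sqr_sqrtr // sumsq_ge0. Qed.

Lemma enorm_coord k (x : 'rV[R]_k) j : `|x ord0 j| <= enorm x.
Proof.
rewrite -(ler_sqr (normr_ge0 _) (enorm_ge0 x)) enorm_sqr real_normK ?num_real //.
rewrite (bigD1 j) //= lerDl; apply: sumr_ge0 => i _; exact: sqr_ge0.
Qed.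

Lemma enorm0 k : enorm (0 : 'rV[R]_k) = 0.
Proof. by rewrite /enorm big1 ?sqrtr0 // => i _; rewrite mxE expr0n. Qed.

Lemma enorm_gt0 k (x : 'rV[R]_k) : x != 0 -> 0 < enorm x.
Proof.
move=> x0; case: (pselect (exists j, x ord0 j != 0)) => [[j xj]|H].
  by apply: lt_le_trans (enorm_coord x j); rewrite normr_gt0.
exfalso; move/eqP: x0; apply; apply/rowP => j; rewrite mxE.
by case: (eqVneq (x ord0 j) 0) => // xj; exfalso; apply: H; exists j.
Qed.

Lemma enormZ k c (x : 'rV[R]_k) : enorm (c *: x) = `|c| * enorm x.
Proof.
rewrite /enorm (eq_bigr (fun i => c^+2 * x ord0 i ^+2)); last first.
  by move=> i _; rewrite mxE exprMn.
by rewrite -mulr_sumr sqrtrM ?sqr_ge0 // sqrtr_sqr.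
Qed.

Lemma enorm_row_mx m n (x : 'rV[R]_m) (y : 'rV[R]_n) :
  enorm (row_mx x y) ^+ 2 = enorm x ^+ 2 + enorm y ^+ 2.
Proof.
rewrite !enorm_sqr big_split_ord /=; congr (_ + _); apply: eq_bigr => i _.
  by rewrite row_mxEl.
by rewrite row_mxEr.
Qed.

Lemma enorm_eq k (x : 'rV[R]_k) : enorm x = Num.sqrt (enorm x ^+ 2).
Proof. by rewrite sqrtr_sqr ger0_norm // enorm_ge0. Qed.

Definition cv k (x : nat -> 'rV[R]_k) (a : 'rV[R]_k) :=
  forall j, (fun i => x i ord0 j) @ \oo --> a ord0 j.

Lemma enorm_cv k (x : nat -> 'rV[R]_k) a : cv x a ->
  (fun i => enorm (x i)) @ \oo --> enorm a.
Proof.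
move=> h.
have hs : (fun i => \sum_(j < k) x i ord0 j ^+ 2) @ \oo --> \sum_(j < k) a ord0 j ^+ 2.
  apply: cvg_big => //; first exact: add_continuous.
  move=> j _; rewrite expr2.
  under eq_cvg do rewrite expr2.
  exact: cvgM.
have := (@continuous_cvg _ _ _ _ _ _ _ _ (@sqrt_continuous R _) hs). by rewrite /enorm; apply.
Qed.

Lemma vcvgP k (x : nat -> 'rV[R]_k) a : vcvg x a <-> cv x a.
Proof.
split.
  move=> h j.
  suff H : (fun i => x i ord0 j - a ord0 j) @ \oo --> 0 by exact/subr_cvg0.
  apply: (@squeeze_cvgr _ _ _ _ (fun i => - enorm (x i - a)) (fun i => enorm (x i - a))).
  - near=> i; have := enorm_coord (x i - a) j; rewrite !mxE -ler_norml; done.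
  - by rewrite -oppr0; apply: cvgN; exact: h.
  - exact: h.
move=> h; rewrite /vcvg /cvg0 -(enorm0 k); apply: enorm_cv => j.
have -> : (0 : 'rV[R]_k) ord0 j = 0 by rewrite mxE.
under eq_cvg do rewrite !mxE.
exact/subr_cvg0/h.
Unshelve. all: end_near.
Qed.


Lemma cv_scale k (c : nat -> R) (c0 : R) (x : nat -> 'rV[R]_k) a :
  c @ \oo --> c0 -> cv x a -> cv (fun i => c i *: x i) (c0 *: a).
Proof.
move=> hc hx j; rewrite mxE; under eq_cvg do rewrite mxE.
exact: (cvgM hc (hx j)).
Qed.

Lemma cv_row_mx m n (x : nat -> 'rV[R]_m) (y : nat -> 'rV[R]_n) a b :
  cv x a -> cv y b -> cv (fun i => row_mx (x i) (y i)) (row_mx a b).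
Proof.
move=> hx hy j; case: (split_ordP j) => l ->.
  rewrite row_mxEl; under eq_cvg do rewrite row_mxEl. exact: hx.
rewrite row_mxEr; under eq_cvg do rewrite row_mxEr. exact: hy.
Qed.

Lemma cv_lsub m n (w : nat -> 'rV[R]_(m + n)) z :
  cv w z -> cv (fun i => lsubmx (w i)) (lsubmx z).
Proof. by move=> h j; rewrite mxE; under eq_cvg do rewrite mxE; exact: h. Qed.

Lemma cv_rsub m n (w : nat -> 'rV[R]_(m + n)) z :
  cv w z -> cv (fun i => rsubmx (w i)) (rsubmx z).
Proof. by move=> h j; rewrite mxE; under eq_cvg do rewrite mxE; exact: h. Qed.

Lemma cv_shift k N (x : nat -> 'rV[R]_k) a : cv x a -> cv (fun i => x (i + N)%N) a.
Proof. by move=> h j; have := h j; rewrite -(cvg_shiftn N). Qed.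

Lemma cv_bound k (x : nat -> 'rV[R]_k) (e : nat -> R) :
  (forall i, enorm (x i) <= e i) -> e @ \oo --> 0 -> cv x 0.
Proof.
move=> hb he; apply/vcvgP; rewrite /vcvg /cvg0.
apply: (@squeeze_cvgr _ _ _ _ (fun=> 0) e) => //.
- by near=> i; rewrite subr0 enorm_ge0 hb.
- exact: cvg_cst.
Unshelve. all: end_near.
Qed.

Lemma cv_enorm1 k (x : nat -> 'rV[R]_k) a :
  cv x a -> (forall i, enorm (x i) = 1) -> enorm a = 1.
Proof.
move=> h e1; have := enorm_cv h; under eq_cvg do rewrite e1.
move=> H; have H1 : (fun=> (1:R)) @ \oo --> (1:R) by exact: cvg_cst.
exact: (@cvg_unique R (@norm_hausdorff _ R^o) _ _ _ _ H H1).
Qed.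

Lemma dirscale k c (x : 'rV[R]_k) : 0 < c ->
  (enorm (c *: x))^-1 *: (c *: x) = (enorm x)^-1 *: x.
Proof.
move=> c0; have c0' : c != 0 by rewrite gt_eqF.
by rewrite enormZ gtr0_norm // invfM scalerA mulrAC mulVf ?mul1r.
Qed.

Lemma Dir_near k (A : set 'rV[R]_k) (x : nat -> 'rV[R]_k) a :
  (forall i, A (x i)) -> (\forall i \near \oo, x i != 0) -> cv x 0 ->
  cv (fun i => (enorm (x i))^-1 *: x i) a -> enorm a = 1 -> Dir A a.
Proof.
move=> hA [N _ hN] h0 hd ha; split => //.
exists (fun i => x (i + N)%N); split; [|split].
- by move=> i; split => //; apply: hN; rewrite /= leq_addl.
- by apply/vcvgP; exact: cv_shift.
- by apply/vcvgP; exact: (cv_shift N hd).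
Qed.


Lemma enorm_dir k (x : 'rV[R]_k) : x != 0 -> enorm ((enorm x)^-1 *: x) = 1.
Proof.
move=> x0; have e0 := enorm_gt0 x0.
by rewrite enormZ ger0_norm ?invr_ge0 ?enorm_ge0 // mulVf // gt_eqF.
Qed.

Lemma harmonic_le (i l : nat) : (l <= i)%N -> harmonic i <= harmonic l :> R.
Proof.
move=> li; rewrite /harmonic /= lef_pV2 ?posrE // ler_nat ltnS //.
Qed.

Lemma Dir_ex k (A : set 'rV[R]_k) : acc0 A -> exists a, Dir A a.
Proof.
move=> hacc.
have [x hx] : exists x : nat -> 'rV[R]_k,
    forall i, A (x i) /\ x i != 0 /\ enorm (x i) < harmonic i.
  have [f hf] := @choice _ _ (fun i y => A y /\ y != 0 /\ enorm y < harmonic i)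
    (fun i => hacc _ (harmonic_gt0 i)).
  by exists f.
pose u i := (enorm (x i))^-1 *: x i.
have u1 : forall i, enorm (u i) = 1 by move=> i; apply: enorm_dir; case: (hx i) => _ [].
pose K := [set v : 'rV[R]_k | forall j, `[(-1 : R), 1]%classic (v ord0 j)].
have cK : compact K.
  by apply: (@rV_compact _ _ (fun=> `[(-1 : R), 1]%classic)) => j; exact: segment_compact.
have FK : (u @ \oo) K.
  exists 0%N => // i _ j /=; rewrite in_itv /= -ler_norml -(u1 i); exact: enorm_coord.
have [a [Ka cla]] := cK _ _ FK.
have [phi hphi] : exists phi : nat -> nat,
    forall l, (l <= phi l)%N /\ ball a (harmonic l) (u (phi l)).
  suff H : forall l, exists i, (l <= i)%N /\ ball a (harmonic l) (u i).
    by have [f hf] := choice H; exists f.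
  move=> l.
  have P1 : (u @ \oo) [set v | exists i, (l <= i)%N /\ v = u i].
    by exists l => // i /= li; exists i.
  have P2 : nbhs a (ball a (harmonic l)) by apply: nbhsx_ballx; exact: harmonic_gt0.
  have [v [[i [li ->]] bv]] := cla _ _ P1 P2.
  by exists i.
exists a; apply: (@Dir_near _ _ (fun l => x (phi l))).
- by move=> l; case: (hx (phi l)).
- by apply: nearW => l; case: (hx (phi l)) => _ [].
- apply: (@cv_bound _ _ harmonic); last exact: cvg_harmonic.
  move=> l; case: (hx (phi l)) => _ [_ hl]; apply: ltW; apply: lt_le_trans hl _.
  by apply: harmonic_le; case: (hphi l).
- move=> j /=.
  suff H : (fun l => u (phi l) ord0 j - a ord0 j) @ \oo --> 0 by exact/subr_cvg0.
  apply: (@squeeze_cvgr _ _ _ _ (fun l => - harmonic l) harmonic).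
  + apply: nearW => l; case: (hphi l) => _ [_ hb]; have := hb ord0 j.
    rewrite /ball /= distrC => /ltW; rewrite ler_norml; done.
  + by rewrite -oppr0; apply: cvgN; exact: cvg_harmonic.
  + exact: cvg_harmonic.
- have : cv (fun l => u (phi l)) a.
    move=> j /=.
    suff H : (fun l => u (phi l) ord0 j - a ord0 j) @ \oo --> 0 by exact/subr_cvg0.
    apply: (@squeeze_cvgr _ _ _ _ (fun l => - harmonic l) harmonic).
    + apply: nearW => l; case: (hphi l) => _ [_ hb]; have := hb ord0 j.
      rewrite /ball /= distrC => /ltW; rewrite ler_norml; done.
    + by rewrite -oppr0; apply: cvgN; exact: cvg_harmonic.
    + exact: cvg_harmonic.
  by move=> h; apply: cv_enorm1 h _ => l; exact: u1.
Qed.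


Lemma side k (A : set 'rV[R]_k) (x : nat -> 'rV[R]_k) (N : nat -> R) c :
  acc0 A -> (forall i, A (x i)) -> cv x 0 -> (forall i, 0 < N i) ->
  cv (fun i => (N i)^-1 *: x i) c ->
  exists a, Dir A a /\ c = enorm c *: a.
Proof.
move=> hacc hA h0 hN hc.
have [c0|c0] := eqVneq (enorm c) 0.
  have [a ha] := Dir_ex hacc.
  exists a; split => //; rewrite c0 scale0r.
  apply/eqP; apply: contraT => cn0; have := enorm_gt0 cn0; rewrite c0 ltxx //.
have cpos : 0 < enorm c by rewrite lt0r c0 enorm_ge0.
exists ((enorm c)^-1 *: c); split; last by rewrite scalerA divff // scale1r.
have ev : \forall i \near \oo, x i != 0.
  have H := @cvgr_gt _ _ _ _ _ _ (enorm_cv hc) 0 cpos.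
  near=> i; have : 0 < enorm ((N i)^-1 *: x i) by near: i; exact: H.
  apply: contraTneq => ->; rewrite scaler0 enorm0 ltxx //.
apply: (@Dir_near _ _ x).
- exact: hA.
- exact: ev.
- exact: h0.
- have -> : (fun i => (enorm (x i))^-1 *: x i) =
     (fun i => (enorm ((N i)^-1 *: x i))^-1 *: ((N i)^-1 *: x i)).
    by apply: funext => i; rewrite dirscale // invr_gt0.
  have cpos' : enorm c != 0 by rewrite gt_eqF.
  exact: (cv_scale (cvgV cpos' (enorm_cv hc)) hc).
- by rewrite enormZ ger0_norm ?invr_ge0 ?enorm_ge0 // mulVf.
Unshelve. all: end_near.
Qed.


Lemma approx k (A : set 'rV[R]_k) a (t : R) :
  acc0 A -> SSP A -> Dir A a -> 0 <= t ->
  exists u : nat -> 'rV[R]_k, (forall i, A (u i)) /\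
     cv (fun i => (harmonic i)^-1 *: u i) (t *: a).
Proof.
move=> hacc hS Da t0.
have hpos : forall i, 0 < harmonic i :> R by move=> i; exact: harmonic_gt0.
have [->|tn0] := eqVneq t 0.
  have [u hu] := @choice _ _ (fun i y => A y /\ y != 0 /\ enorm y < harmonic i ^+ 2)
    (fun i => hacc _ (exprn_gt0 2 (hpos i))).
  exists u; split; first by move=> i; case: (hu i).
  rewrite scale0r; apply: (@cv_bound _ _ harmonic); last exact: cvg_harmonic.
  move=> i; rewrite enormZ ger0_norm; last by rewrite invr_ge0 ltW.
  rewrite ler_pdivrMl // -expr2; apply: ltW; by case: (hu i) => _ [].
have tpos : 0 < t by rewrite lt0r tn0.
have ea : enorm a = 1 by case: Da.
pose v i := (t * harmonic i) *: a.
have ev : forall i, enorm (v i) = t * harmonic i.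
  by move=> i; rewrite enormZ ea mulr1 ger0_norm // mulr_ge0 // ltW.
have vpos : forall i, 0 < t * harmonic i by move=> i; rewrite mulr_gt0.
have [b [hb [hb1 _]]] : exists b : nat -> 'rV[R]_k,
      (forall i, A (b i)) /\
      cvg0 (fun i => enorm (v i - b i) / enorm (v i)) /\
      cvg0 (fun i => enorm (v i - b i) / enorm (b i)).
  apply: (hS v a) => //.
  - move=> i; apply/eqP => /(congr1 (@enorm R k)); rewrite ev enorm0 => /eqP.
    by rewrite gt_eqF.
  - apply/vcvgP; apply: (@cv_bound _ _ (fun i => t * harmonic i)).
      by move=> i; rewrite ev.
    by rewrite -(mulr0 t); apply: cvgM; [exact: cvg_cst | exact: cvg_harmonic].
  - have -> : (fun i => (enorm (v i))^-1 *: v i) = (fun=> a).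
      by apply: funext => i; rewrite /v dirscale // ea invr1 scale1r.
    by apply/vcvgP => j; exact: cvg_cst.
exists b; split => //.
apply/vcvgP; rewrite /vcvg.
have -> : (fun i => enorm ((harmonic i)^-1 *: b i - t *: a)) =
          (fun i => t * (enorm (v i - b i) / enorm (v i))).
  apply: funext => i.
  have -> : (harmonic i)^-1 *: b i - t *: a = (- (harmonic i)^-1) *: (v i - b i).
    apply/rowP => j; rewrite /v !mxE.
    have := hpos i; move: (harmonic i) => h h0.
    by field; rewrite gt_eqF.
  rewrite enormZ normrN ger0_norm ?invr_ge0 ?ltW // ev.
  have := hpos i; move: (harmonic i) (enorm (v i - b i)) => h E h0.
  by field; rewrite ?gt_eqF.
rewrite /cvg0 -(mulr0 t); apply: cvgM; [exact: cvg_cst | exact: hb1].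
Qed.


Lemma lsub0 m n : lsubmx (0 : 'rV[R]_(m + n)) = 0.
Proof. by apply/rowP => j; rewrite !mxE. Qed.
Lemma rsub0 m n : rsubmx (0 : 'rV[R]_(m + n)) = 0.
Proof. by apply/rowP => j; rewrite !mxE. Qed.
Lemma lsubZ m n c (w : 'rV[R]_(m + n)) : lsubmx (c *: w) = c *: lsubmx w.
Proof. by apply/rowP => j; rewrite !mxE. Qed.
Lemma rsubZ m n c (w : 'rV[R]_(m + n)) : rsubmx (c *: w) = c *: rsubmx w.
Proof. by apply/rowP => j; rewrite !mxE. Qed.

Lemma Dir_sub m n (A : set 'rV[R]_m) (B : set 'rV[R]_n) :
  acc0 A -> acc0 B -> Dir (setprod A B) `<=` joinDir A B.
Proof.
move=> hA hB z [ez [w [hw [w0 wd]]]].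
move/vcvgP: w0 => w0; move/vcvgP: wd => wd.
have Npos : forall i, 0 < enorm (w i) by move=> i; apply: enorm_gt0; case: (hw i).
have hxA : forall i, A (lsubmx (w i)).
  by move=> i; case: (hw i) => -[x [y [hx [hy ->]]]] _; rewrite row_mxKl.
have hyB : forall i, B (rsubmx (w i)).
  by move=> i; case: (hw i) => -[x [y [hx [hy ->]]]] _; rewrite row_mxKr.
have c1 : cv (fun i => (enorm (w i))^-1 *: lsubmx (w i)) (lsubmx z).
  have := cv_lsub wd; congr cv; apply: funext => i; by rewrite lsubZ.
have c2 : cv (fun i => (enorm (w i))^-1 *: rsubmx (w i)) (rsubmx z).
  have := cv_rsub wd; congr cv; apply: funext => i; by rewrite rsubZ.
have l0 : cv (fun i => lsubmx (w i)) 0 by rewrite -(lsub0 m n); exact: cv_lsub.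
have r0 : cv (fun i => rsubmx (w i)) 0 by rewrite -(rsub0 m n); exact: cv_rsub.
have [a [Da ea]] := side hA hxA l0 Npos c1.
have [b [Db eb]] := side hB hyB r0 Npos c2.
set t := enorm (lsubmx z) in ea.
set s := enorm (rsubmx z) in eb.
have ts : t ^+ 2 + s ^+ 2 = 1.
  by rewrite /t /s -enorm_row_mx hsubmxK ez expr1n.
have t0 : 0 <= t by exact: enorm_ge0.
have s0 : 0 <= s by exact: enorm_ge0.
exists a, b, t; split => //; split => //; split => //; split.
  rewrite -(expr_le1 (n:=2)) // -ts lerDl; exact: sqr_ge0.
have -> : Num.sqrt (1 - t ^+ 2) = s.
  by rewrite -ts addrAC subrr add0r sqrtr_sqr ger0_norm.
by rewrite -ea -eb hsubmxK.
Qed.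

Lemma join_sub m n (A : set 'rV[R]_m) (B : set 'rV[R]_n) :
  acc0 A -> acc0 B -> SSP A -> SSP B -> joinDir A B `<=` Dir (setprod A B).
Proof.
move=> hA hB sA sB z [a [b [t [Da [Db [t0 [t1 ->]]]]]]].
set s := Num.sqrt (1 - t ^+ 2).
have [u [hu cu]] := approx hA sA Da t0.
have [v [hv cv']] := approx hB sB Db (sqrtr_ge0 (1 - t ^+ 2)).
have ea : enorm a = 1 by case: Da.
have eb : enorm b = 1 by case: Db.
have ez : enorm (row_mx (t *: a) (s *: b)) = 1.
  rewrite enorm_eq enorm_row_mx !enormZ ea eb !mulr1 !real_normK ?num_real //.
  rewrite sqr_sqrtr ?subr_ge0 ?expr_le1 // addrC subrK sqrtr1 //.
have hpos : forall i, 0 < harmonic i :> R by move=> i; exact: harmonic_gt0.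
pose q i := row_mx ((harmonic i)^-1 *: u i) ((harmonic i)^-1 *: v i).
have cq : cv q (row_mx (t *: a) (s *: b)) by exact: cv_row_mx.
have wq : forall i, row_mx (u i) (v i) = harmonic i *: q i.
  move=> i; rewrite /q scale_row_mx !scalerA divff ?scale1r //.
  by rewrite gt_eqF.
have ev : \forall i \near \oo, row_mx (u i) (v i) != 0.
  have H := @cvgr_gt _ _ _ _ _ _ (enorm_cv cq) 0 (ltac:(by rewrite ez ltr01)).
  near=> i; have : 0 < enorm (q i) by near: i; exact: H.
  rewrite wq; apply: contraTneq => qe.
  have : q i = (harmonic i)^-1 *: (harmonic i *: q i).
    by rewrite scalerA mulVf ?scale1r // gt_eqF.
  by rewrite qe scaler0 => ->; rewrite enorm0 ltxx.
apply: (@Dir_near _ _ (fun i => row_mx (u i) (v i))).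
- by move=> i; exists (u i), (v i).
- exact: ev.
- have -> : (fun i => row_mx (u i) (v i)) = (fun i => harmonic i *: q i).
    by apply: funext => i; rewrite wq.
  rewrite -(scale0r (row_mx (t *: a) (s *: b))).
  exact: (cv_scale cvg_harmonic cq).
- have -> : (fun i => (enorm (row_mx (u i) (v i)))^-1 *: row_mx (u i) (v i))
     = (fun i => (enorm (q i))^-1 *: q i).
    by apply: funext => i; rewrite wq dirscale.
  have e0 : enorm (row_mx (t *: a) (s *: b)) != 0 by rewrite ez oner_neq0.
  have := cv_scale (cvgV e0 (enorm_cv cq)) cq.
  by rewrite ez invr1 scale1r; apply.
- exact: ez.
Unshelve. all: end_near.
Qed.

End Helpers.

Unset Implicit Arguments. Set Strict Implicit.
Theorem proposition2p34 (R : realType) (m n : nat)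
  (A : set 'rV[R]_m) (B : set 'rV[R]_n) :
  acc0 A -> acc0 B ->
  Dir (setprod A B) `<=` joinDir A B /\
  (SSP A -> SSP B -> Dir (setprod A B) = joinDir A B).
Proof.
move=> hA hB; split; first exact: Dir_sub.
move=> sA sB; apply/seteqP; split; first exact: Dir_sub.
exact: join_sub.
Qed.
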